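(* Let $\bar\alpha$ be an affine infra-nilmanifold endomorphism of $\Gamma\backslash G$ induced by $\alpha\in\mathrm{Aff}(G)$, let $N=\Gamma\cap G$ be the Fitting subgroup of $\Gamma$, and let $p:N\backslash G\to\Gamma\backslash G$, $Nx\mapsto\Gamma x$, be the natural covering map. Then $\alpha N\alpha^{-1}\subseteq N$, so $\alpha$ induces an affine nilmanifold endomorphism $\tilde\alpha(Nx)=N\,{}^{\alpha}x$ of $N\backslash G$, which is a lift of $\bar\alpha$ (i.e. $p\circ\tilde\alpha=\bar\alpha\circ p$), and $$p^{-1}(\mathrm{ePer}(\bar\alpha))=\mathrm{ePer}(\tilde\alpha),\qquad p^{-1}(\mathrm{Per}(\bar\alpha))=\mathrm{Per}(\tilde\alpha).$$
   Context: $G$ is a connected, simply connected nilpotent Lie group, $\mathrm{Aff}(G)=G\rtimes\mathrm{Aut}(G)$ acting by ${}^{(g,\delta)}x=g\delta(x)$, with $G$ identified with pure translations. $\Gamma\le G\rtimes F$ ($F\le \mathrm{Aut}(G)$ finite) is a torsion-free discrete subgroup with $\Gamma\backslash G$ compact, and $\bar\alpha(\Gamma x)=\Gamma\,{}^\alpha x$ where $\alpha\Gamma\alpha^{-1}\subseteq\Gamma$. For a self-map $f$: $\mathrm{Per}(f)=\{x:\exists k>0, f^k(x)=x\}$, $\mathrm{ePer}(f)=\{x:\exists k>0, f^k(x)\in\mathrm{Per}(f)\}$. *)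

(* Defs.v *)
From Stdlib Require Import Arith List ClassicalEpsilon.
Set Implicit Arguments.

Record Group := {
  carrier :> Type;
  gmul : carrier -> carrier -> carrier;
  gone : carrier;
  ginv : carrier -> carrier;
  gmulA : forall x y z, gmul x (gmul y z) = gmul (gmul x y) z;
  gmul1 : forall x, gmul gone x = x;
  gmulV : forall x, gmul (ginv x) x = gone
}.

Section AffDefs.
Variable G : Group.

Definition is_aut (d : G -> G) : Prop :=
  (forall x y, d (gmul G x y) = gmul G (d x) (d y)) /\
  exists e : G -> G, (forall x, e (d x) = x) /\ (forall x, d (e x) = x).

(** Aff(G) = G ⋊ Aut(G); an element is a pair (g, δ) with δ an automorphism. *)
Definition Aff : Type := (G * (G -> G))%type.
Definition is_aff (a : Aff) : Prop := is_aut (snd a).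

Definition aff_mul (a b : Aff) : Aff :=
  (gmul G (fst a) (snd a (fst b)), fun x => snd a (snd b x)).
Definition aff_one : Aff := (gone G, fun x => x).
Definition aff_pow (a : Aff) (n : nat) : Aff := Nat.iter n (aff_mul a) aff_one.

Definition aff_act (a : Aff) (x : G) : G := gmul G (fst a) (snd a x).

(** N = Γ ∩ G, G identified with pure translations (g, id). *)
Definition transl_part (Gam : Aff -> Prop) : Aff -> Prop :=
  fun a => Gam a /\ snd a = (fun x => x).

(** Orbit space H\G of a set H ⊆ Aff(G) acting on G, as a type of classes. *)
Definition cls (H : Aff -> Prop) (x : G) : G -> Prop :=
  fun y => exists h, H h /\ y = aff_act h x.
Definition Quot (H : Aff -> Prop) : Type :=
  { C : G -> Prop | exists x, C = cls H x }.
Definition qpt (H : Aff -> Prop) (x : G) : Quot H :=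
  exist _ (cls H x) (ex_intro _ x eq_refl).
Definition rep (H : Aff -> Prop) (C : Quot H) : G :=
  proj1_sig (constructive_indefinite_description _ (proj2_sig C)).

(** induced map  H x ↦ H ^{a}x  (well defined when a H a^{-1} ⊆ H) *)
Definition induced (H : Aff -> Prop) (a : Aff) (C : Quot H) : Quot H :=
  qpt H (aff_act a (rep C)).

Definition proj_cov (H K : Aff -> Prop) (C : Quot K) : Quot H :=
  qpt H (rep C).
End AffDefs.
Arguments is_aut {G} d.
Arguments is_aff {G} a.
Arguments aff_one {G}.
Arguments transl_part {G} Gam.
Arguments induced {G} H a C.
Arguments proj_cov {G} H {K} C.

Definition Per {X : Type} (f : X -> X) (x : X) : Prop :=
  exists k, 0 < k /\ Nat.iter k f x = x.
Definition ePer {X : Type} (f : X -> X) (x : X) : Prop :=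
  exists k, 0 < k /\ Per f (Nat.iter k f x).

(* Main.v *)
Require Import Defs.
From Stdlib Require Import Arith List Lia FunctionalExtensionality PropExtensionality ProofIrrelevance ClassicalEpsilon.

Definition hom {G : Group} (d : G -> G) := forall x y, d (gmul G x y) = gmul G (d x) (d y).

Lemma act_mul (G : Group) (a b : Aff G) x : hom (snd a) ->
  aff_act (aff_mul a b) x = aff_act a (aff_act b x).
Proof.
  intro Ha. destruct a as [ga da], b as [gb db]. unfold aff_act, aff_mul; simpl in *.
  rewrite Ha, gmulA. reflexivity.
Qed.

Lemma act_one (G : Group) x : aff_act (@aff_one G) x = x.
Proof. unfold aff_act, aff_one; simpl. apply gmul1. Qed.

Definition Hsub {G : Group} (H : Aff G -> Prop) :=
  H aff_one /\ (forall a b, H a -> H b -> H (aff_mul a b)) /\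
  (forall a, H a -> exists b, H b /\ aff_mul b a = aff_one) /\
  (forall a, H a -> hom (snd a)).

Definition rel {G : Group} (H : Aff G -> Prop) (x y : G) :=
  exists h, H h /\ y = aff_act h x.

Lemma rel_refl G (H : Aff G -> Prop) x : Hsub H -> rel H x x.
Proof. intros [h1 _]. exists aff_one. split; auto. now rewrite act_one. Qed.

Lemma rel_sym G (H : Aff G -> Prop) x y : Hsub H -> rel H x y -> rel H y x.
Proof.
  intros (h1 & hm & hi & hh) (h & Hh & ->).
  destruct (hi h Hh) as (b & Hb & Eb). exists b; split; auto.
  rewrite <- act_mul by auto. rewrite Eb, act_one. reflexivity.
Qed.

Lemma rel_trans G (H : Aff G -> Prop) x y z : Hsub H -> rel H x y -> rel H y z -> rel H x z.
Proof.
  intros (h1 & hm & hi & hh) (h & Hh & ->) (h' & Hh' & ->).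
  exists (aff_mul h' h); split; auto. rewrite act_mul by auto. reflexivity.
Qed.

Lemma quot_ext G (H : Aff G -> Prop) (C D : Quot H) : proj1_sig C = proj1_sig D -> C = D.
Proof.
  destruct C as [c pc], D as [d pd]; simpl; intros ->. f_equal. apply proof_irrelevance.
Qed.

Lemma qpt_eq G (H : Aff G -> Prop) x y : Hsub H -> rel H x y -> qpt H x = qpt H y.
Proof.
  intros HS R. apply quot_ext; simpl. unfold cls.
  apply functional_extensionality; intro z. apply propositional_extensionality.
  change (rel H x z <-> rel H y z). split; intro R'.
  - eapply rel_trans; eauto. apply rel_sym; auto.
  - eapply rel_trans; eauto.
Qed.

Lemma qpt_eq_inv G (H : Aff G -> Prop) x y : Hsub H -> qpt H x = qpt H y -> rel H x y.
Proof.
  intros HS E. apply (f_equal (@proj1_sig _ _)) in E. simpl in E.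
  assert (cls H y y) by (apply (rel_refl G H y HS)).
  rewrite <- E in H0. exact H0.
Qed.

Lemma rep_spec G (H : Aff G -> Prop) (C : Quot H) : proj1_sig C = cls H (rep C).
Proof.
  unfold rep. destruct (constructive_indefinite_description _ _). simpl. exact e.
Qed.

Lemma qpt_rep G (H : Aff G -> Prop) (C : Quot H) : qpt H (rep C) = C.
Proof. apply quot_ext. simpl. symmetry. apply rep_spec. Qed.

Lemma rel_rep G (H : Aff G -> Prop) x : Hsub H -> rel H x (rep (qpt H x)).
Proof.
  intro HS. apply qpt_eq_inv; auto. now rewrite qpt_rep.
Qed.

Lemma nodup_map_seq (T : Type) (s : nat -> T) n a :
  (forall i j, i < j -> s i <> s j) -> NoDup (map s (seq a n)).
Proof.
  intro Hs. revert a; induction n; intro a; simpl; constructor; auto.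
  intro Hin. apply in_map_iff in Hin. destruct Hin as (y & Ey & Iy).
  apply in_seq in Iy. apply (Hs a y); [lia | auto].
Qed.

Lemma pigeon (T : Type) (l : list T) (s : nat -> T) :
  (forall n, In (s n) l) -> exists i j, i < j /\ s i = s j.
Proof.
  intro Hl. apply Classical_Prop.NNPP; intro Hn.
  assert (Hs : forall i j, i < j -> s i <> s j).
  { intros i j Hij E. apply Hn. exists i, j. auto. }
  pose proof (nodup_map_seq T s (S (length l)) 0 Hs) as ND.
  assert (incl (map s (seq 0 (S (length l)))) l).
  { intros z Hz. apply in_map_iff in Hz. destruct Hz as (y & <- & _). auto. }
  pose proof (NoDup_incl_length ND H). rewrite length_map, length_seq in H0. lia.
Qed.

Lemma iter_cancel (T : Type) (phi : T -> T) (inj : forall a b, phi a = phi b -> a = b) z i d :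
  Nat.iter i phi z = Nat.iter (i + d) phi z -> z = Nat.iter d phi z.
Proof.
  induction i; simpl; [auto|]. intro E; apply IHi, inj, E.
Qed.

Lemma iter_mul (T : Type) (g : T -> T) j k x :
  Nat.iter j (Nat.iter k g) x = Nat.iter (j * k) g x.
Proof.
  induction j; simpl; auto. rewrite Nat.iter_add, IHj. reflexivity.
Qed.

Theorem mainTheorem8
  (G : Group)
  (F : (G -> G) -> Prop)
  (Gam : Aff G -> Prop)
  (alpha : Aff G)
  (hF_aut : forall d, F d -> is_aut d)
  (hF_one : F (fun x => x))
  (hF_mul : forall d e, F d -> F e -> F (fun x => d (e x)))
  (hF_inv : forall d, F d -> exists e, F e /\
              (forall x, e (d x) = x) /\ (forall x, d (e x) = x))
  (hF_fin : exists l : list (G -> G), forall d, F d -> In d l)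
  (hGam_F : forall a, Gam a -> F (snd a))
  (hGam_one : Gam (aff_one))
  (hGam_mul : forall a b, Gam a -> Gam b -> Gam (aff_mul a b))
  (hGam_inv : forall a, Gam a -> exists b, Gam b /\
                aff_mul b a = aff_one /\ aff_mul a b = aff_one)
  (hGam_tf : forall a n, Gam a -> 0 < n -> aff_pow a n = aff_one -> a = aff_one)
  (halpha : is_aff alpha)
  (halphaGam : forall g, Gam g -> exists g', Gam g' /\ aff_mul alpha g = aff_mul g' alpha) :
  let N := transl_part Gam in
  let p := @proj_cov G Gam N in
  let abar := induced Gam alpha in
  let atil := induced N alpha in
  (forall n, N n -> exists n', N n' /\ aff_mul alpha n = aff_mul n' alpha) /\
  (forall c, p (atil c) = abar (p c)) /\
  (forall c, ePer abar (p c) <-> ePer atil c) /\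
  (forall c, Per abar (p c) <-> Per atil c).
Proof.
  intros N p abar atil.
  destruct halpha as (Ahom & E & HEA & HAE).
  set (A := snd alpha) in *.
  assert (HGhom : forall a, Gam a -> hom (snd a)) by (intros a Ha; exact (proj1 (hF_aut _ (hGam_F a Ha)))).
  assert (HSG : Hsub Gam).
  { split; [|split; [|split]]; auto.
    intros a Ha. destruct (hGam_inv a Ha) as (b & ? & ? & ?). eauto. }
  assert (HNG : forall a, N a -> Gam a) by (intros a [? ?]; auto).
  assert (HSN : Hsub N).
  { split; [|split; [|split]].
    - split; [exact hGam_one| reflexivity].
    - intros a b [Ha Ea] [Hb Eb]. split; auto. unfold aff_mul; simpl. rewrite Ea, Eb. reflexivity.
    - intros a [Ha Ea]. destruct (hGam_inv a Ha) as (b & Hb & E1 & E2). exists b. split; auto.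
      split; auto. apply (f_equal snd) in E1. unfold aff_mul, aff_one in E1; simpl in E1.
      rewrite Ea in E1. exact E1.
    - intros a [Ha Ea]. rewrite Ea. intros x y; reflexivity. }
  assert (P1 : forall n, N n -> exists n', N n' /\ aff_mul alpha n = aff_mul n' alpha).
  { intros n [Hn En]. destruct (halphaGam n Hn) as (g' & Hg' & Eg). exists g'. split; auto.
    split; auto. apply functional_extensionality; intro y.
    pose proof (f_equal snd Eg) as Es. unfold aff_mul in Es; simpl in Es.
    apply (f_equal (fun f => f (E y))) in Es. rewrite En in Es. simpl in Es.
    fold A in Es. rewrite !HAE in Es. auto. }
  assert (Rcomp : forall H : Aff G -> Prop, Hsub H ->
     (forall g, H g -> exists g', H g' /\ aff_mul alpha g = aff_mul g' alpha) ->
     forall x y, rel H x y -> rel H (aff_act alpha x) (aff_act alpha y)).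
  { intros H HS Hc x y (h & Hh & ->). destruct (Hc h Hh) as (h' & Hh' & Eh).
    exists h'. split; auto. rewrite <- act_mul by exact Ahom. rewrite Eh.
    apply act_mul. destruct HS as (_ & _ & _ & hh). auto. }
  assert (Ind : forall H : Aff G -> Prop, Hsub H ->
     (forall g, H g -> exists g', H g' /\ aff_mul alpha g = aff_mul g' alpha) ->
     forall x, induced H alpha (qpt H x) = qpt H (aff_act alpha x)).
  { intros H HS Hc x. unfold induced. apply qpt_eq; auto. apply rel_sym; auto.
    apply Rcomp; auto. apply rel_rep; auto. }
  assert (IndG := Ind Gam HSG halphaGam).
  assert (IndN := Ind N HSN P1).
  assert (Pq : forall x, p (qpt N x) = qpt Gam x).
  { intro x. unfold p, proj_cov. apply qpt_eq; auto. apply rel_sym; auto.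
    destruct (rel_rep G N x HSN) as (h & Hh & Eh). exists h; auto. }
  assert (P2 : forall c, p (atil c) = abar (p c)).
  { intro c. rewrite <- (qpt_rep G N c). set (x := rep c).
    unfold atil, abar. rewrite IndN, Pq, Pq, IndG. reflexivity. }
  assert (It : forall k c, p (Nat.iter k atil c) = Nat.iter k abar (p c)).
  { induction k; intro c; simpl; auto. rewrite P2, IHk. reflexivity. }
  assert (ItN : forall k x, Nat.iter k atil (qpt N x) = qpt N (Nat.iter k (aff_act alpha) x)).
  { induction k; intro x; simpl; auto. rewrite IHk. apply IndN. }
  assert (ItG : forall k x, Nat.iter k abar (qpt Gam x) = qpt Gam (Nat.iter k (aff_act alpha) x)).
  { induction k; intro x; simpl; auto. rewrite IHk. apply IndG. }
  assert (Conj : forall k g, Gam g -> exists g', Gam g' /\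
     (forall y, Nat.iter k (aff_act alpha) (aff_act g y) = aff_act g' (Nat.iter k (aff_act alpha) y)) /\
     (forall y, snd g' y = Nat.iter k A (snd g (Nat.iter k E y)))).
  { induction k; intros g Hg.
    - exists g. simpl. auto.
    - destruct (IHk g Hg) as (g1 & Hg1 & E1 & S1).
      destruct (halphaGam g1 Hg1) as (g2 & Hg2 & Eg2).
      exists g2. split; auto. split.
      + intro y. simpl. rewrite E1. rewrite <- act_mul by exact Ahom. rewrite Eg2.
        apply act_mul; auto.
      + intro y. pose proof (f_equal snd Eg2) as Es. unfold aff_mul in Es; simpl in Es.
        apply (f_equal (fun f => f (E y))) in Es. fold A in Es. rewrite HAE in Es.
        rewrite <- Es, S1, (Nat.iter_succ_r k _ E). reflexivity. }
  assert (EA : forall k z, Nat.iter k E (Nat.iter k A z) = z).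
  { induction k; intro z; simpl; auto. rewrite <- Nat.iter_swap, HEA. auto. }
  assert (PerEq : forall c, Per abar (p c) <-> Per atil c).
  { intro c. split.
    2:{ intros (k & Hk & Ek). exists k; split; auto. rewrite <- It, Ek. reflexivity. }
    rewrite <- (qpt_rep G N c). set (x := rep c). rewrite Pq.
    intros (k & Hk & Ek). rewrite ItG in Ek. apply qpt_eq_inv in Ek; auto.
    apply rel_sym in Ek; auto. destruct Ek as (g0 & Hg0 & Eg0).
    set (f := Nat.iter k (aff_act alpha)).
    set (d0 := snd g0).
    set (phi := fun (d : G -> G) => fun y => Nat.iter k A (d (Nat.iter k E (d0 y)))).
    assert (Seq : forall n, exists g, Gam g /\ Nat.iter n f x = aff_act g x /\
                  snd g = Nat.iter n phi (fun y => y)).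
    { induction n.
      - exists aff_one. split; auto. split; auto. now rewrite act_one.
      - destruct IHn as (g & Hg & Eg & Sg).
        destruct (Conj k g Hg) as (g' & Hg' & E' & S').
        exists (aff_mul g' g0). split; auto. split.
        + simpl. rewrite Eg. unfold f. rewrite E'. unfold f in Eg0. rewrite Eg0.
          symmetry. apply act_mul; auto.
        + simpl. apply functional_extensionality; intro y. unfold aff_mul; simpl.
          rewrite S', Sg. reflexivity. }
    assert (Hd0 := hF_aut d0 (hGam_F g0 Hg0)). destruct Hd0 as (_ & e0 & _ & Hd0e).
    assert (Pinj : forall a b, phi a = phi b -> a = b).
    { intros a b Eab. apply functional_extensionality; intro z.
      apply (f_equal (fun f => f (e0 (Nat.iter k A z)))) in Eab. unfold phi in Eab.
      rewrite Hd0e, EA in Eab. apply (f_equal (Nat.iter k E)) in Eab.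
      rewrite !EA in Eab. exact Eab. }
    destruct hF_fin as (l & Hl).
    destruct (pigeon _ l (fun n => Nat.iter n phi (fun y => y))) as (i & j & Hij & Eij).
    { intro n. destruct (Seq n) as (g & Hg & _ & Sg). rewrite <- Sg. apply Hl, hGam_F, Hg. }
    replace j with (i + (j - i)) in Eij by lia.
    apply iter_cancel in Eij; auto.
    destruct (Seq (j - i)) as (g & Hg & Eg & Sg). rewrite <- Eij in Sg.
    exists ((j - i) * k). split; [nia|].
    rewrite ItN. rewrite <- iter_mul. fold f. rewrite Eg. symmetry. apply qpt_eq; auto.
    exists g. split; auto. split; auto. }
  split; [exact P1|]. split; [exact P2|]. split; [|exact PerEq].
  intro c. split.
  - intros (k & Hk & Pk). exists k. split; auto. apply PerEq. rewrite It. exact Pk.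
  - intros (k & Hk & Pk). exists k. split; auto. rewrite <- It. apply PerEq. exact Pk.
Qed.
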